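(* Let $A\cong \mathbb{Z}_2^r\times N$, where $r\ge 0$ is an integer and $N$ is a non-cyclic abelian group of odd order, let $n=|A|$, and let $m$ be the number of elements of $A$ of order at most $2$. Let $\Gamma=\Gamma(A,S)$ be a Cayley graph on $A$ (for some inverse-closed $S\subseteq A\setminus\{0\}$) such that $\mathrm{Aut}(\Gamma)=A\rtimes\langle i\rangle$. If $\chi(\Gamma)<\frac{n}{m+2\log(2n)}$, then $\chi_D(\Gamma)\le\chi(\Gamma)+1$.
   Context: The Cayley graph $\Gamma(A,S)$ has vertex set $A$, with $x,y$ adjacent iff $y-x\in S$. $i:A\to A$ is $i(x)=-x$, and $A\rtimes\langle i\rangle$ denotes the group of permutations of $A$ generated by the translations $x\mapsto x+g$ ($g\in A$) and $i$. $\chi$ is the chromatic number; the distinguishing chromatic number $\chi_D(G)$ is the least $r$ such that $V(G)$ can be partitioned into independent sets $V_1,\dots,V_r$ such that for every non-identity automorphism $\pi$ of $G$ there is some $j$ with $\pi(V_j)\ne V_j$. $\log$ denotes $\log_2$. *)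

(* Defs.v *)
From mathcomp Require Import all_boot all_fingroup all_solvable.
From Stdlib Require Import Reals.
Set Implicit Arguments. Unset Strict Implicit. Unset Printing Implicit Defensive.

Local Open Scope group_scope.

Section CayleyDefs.
Variable A : finGroupType.

(* Cayley graph Gamma(A,S): x ~ y iff y - x \in S, written multiplicatively. *)
Definition cay_adj (S : {set A}) (x y : A) : bool := (y * x^-1) \in S.

Definition connection_set (S : {set A}) : Prop :=
  (1 \notin S) /\ (forall s, s \in S -> s^-1 \in S).

Definition is_cay_aut (S : {set A}) (p : {perm A}) : bool :=
  [forall x, forall y, cay_adj S (p x) (p y) == cay_adj S x y].

Definition cay_aut_set (S : {set A}) : {set {perm A}} := [set p | is_cay_aut S p].

Definition transl (g : A) : {perm A} := perm (mulgI g).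
Definition invperm : {perm A} := perm (@invg_inj A).

(* A |x <i> as a permutation group of A: generated by translations and i. *)
Definition hol_group : {set {perm A}} :=
  << [set transl g | g in [set: A]] :|: [set invperm] >>.

Definition proper_col (S : {set A}) k (f : A -> 'I_k) : Prop :=
  forall x y, cay_adj S x y -> f x != f y.

Definition colorable (S : {set A}) (k : nat) : Prop :=
  exists f : A -> 'I_k, proper_col S f.

Definition is_chromatic_number (S : {set A}) (k : nat) : Prop :=
  colorable S k /\ (forall k', colorable S k' -> k <= k').

Definition col_class k (f : A -> 'I_k) (j : 'I_k) : {set A} := [set x | f x == j].

Definition dist_colorable (S : {set A}) (k : nat) : Prop :=
  exists f : A -> 'I_k, proper_col S f /\
    forall p : {perm A}, is_cay_aut S p -> p != 1 ->
      exists j : 'I_k, p @: col_class f j != col_class f j.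

Definition is_dist_chromatic_number (S : {set A}) (k : nat) : Prop :=
  dist_colorable S k /\ (forall k', dist_colorable S k' -> k <= k').

End CayleyDefs.

Definition log2 (x : R) : R := (ln x / ln 2)%R.

Definition chi_bound (chi n m : nat) : Prop :=
  (INR chi < INR n / (INR m + 2 * log2 (2 * INR n)))%R.

(* Main.v *)
Require Import Defs.
From Stdlib Require Import Reals Lra Lia.
From mathcomp Require Import all_boot all_fingroup all_solvable.
From mathcomp Require Import zify.
Set Implicit Arguments. Unset Strict Implicit. Unset Printing Implicit Defensive.

Lemma INR_expn2 k : INR (2 ^ k) = pow 2 k.
Proof.
elim: k => [|k IH]; first by rewrite expn0 /=; lra.
by rewrite expnS mulnE mult_INR IH /=; lra.
Qed.

Section RS.
Local Open Scope R_scope.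
Lemma real_step (chi n m v : nat) : (0 < chi)%N -> (0 < n)%N -> (0 < m)%N ->
  (n <= chi * v)%N -> chi_bound chi n m -> (m < v)%N /\ ((2*n)^2 < 2^(v - m))%N.
Proof.
move=> /ltP Hc /ltP Hn /ltP Hm /leP Hv; rewrite /chi_bound /log2 => H.
have Rc : 0 < INR chi by apply: lt_0_INR.
have Rn : 1 <= INR n by apply: (le_INR 1).
have Rm : 1 <= INR m by apply: (le_INR 1).
have Rv : INR n <= INR chi * INR v by rewrite -mult_INR -mulnE; apply: le_INR.
have l2 : 0 < ln 2 by rewrite -ln_1; apply: ln_increasing; lra.
have l2n : 0 < ln (2 * INR n) by rewrite -ln_1; apply: ln_increasing; lra.
set L := (ln (2 * INR n) / ln 2) in H.
have L0 : 0 < L by apply: Rdiv_lt_0_compat.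
have D0 : 0 < INR m + 2 * L by lra.
have H1 : INR chi * (INR m + 2 * L) < INR n.
  apply (Rmult_lt_reg_r (/ (INR m + 2 * L))); first by apply: Rinv_0_lt_compat.
  rewrite Rmult_assoc Rinv_r; last lra. rewrite Rmult_1_r; exact H.
have H2 : INR m + 2 * L < INR v by nra.
have mv : (m < v)%coq_nat by apply: INR_lt; lra.
split; first by apply/ltP.
have H3 : 2 * ln (2 * INR n) < INR (v - m) * ln 2.
  rewrite minus_INR; last lia.
  have : 2 * L * ln 2 < (INR v - INR m) * ln 2 by apply: Rmult_lt_compat_r; lra.
  have e : 2 * L * ln 2 = 2 * ln (2 * INR n) by rewrite /L; field; lra.
  lra.
apply/ltP; apply: INR_lt.
rewrite INR_expn2 expnS expn1 !mulnE !mult_INR.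
apply: ln_lt_inv.
- have : 0 < INR 2 * INR n by rewrite (_ : INR 2 = 2); [lra| simpl; lra].
  nra.
- apply: pow_lt; lra.
rewrite ln_pow; last lra.
rewrite ln_mult; try (rewrite (_ : INR 2 = 2); [nra| simpl; lra]).
Qed.
End RS.

Section OrbS.
Local Open Scope group_scope.
Section Orb.
Variable T : finType.

Definition bads (p : {perm T}) (V : {set T}) :=
  [set X : {set T} | (X \subset V) && (p @: X == X)].
Definition fixs (p : {perm T}) (V : {set T}) := [set x in V | p x == x].

Lemma inv_sub (p : {perm T}) (X : {set T}) x : p @: X = X -> x \in X -> porbit p x \subset X.
Proof.
move=> pX xX; apply/subsetP => y /porbitP [i ->].
elim: i => [|i IH]; first by rewrite expg0 perm1.
by rewrite expgSr permM -pX imset_f.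
Qed.

Lemma orbit_count (p : {perm T}) (V : {set T}) : #|bads p V| ^ 2 <= 2 ^ (#|V| + #|fixs p V|).
Proof.
pose P := [set porbit p x | x in [set x in V | porbit p x \subset V]].
have step1 : #|bads p V| <= 2 ^ #|P|.
  pose phi (X : {set T}) := [set O in P | O \subset X].
  rewrite -card_powerset -(card_in_imset (f := phi)).
    apply: subset_leq_card; apply/subsetP => _ /imsetP [X _ ->].
    by rewrite inE; apply/subsetP => O; rewrite inE => /andP [].
  have cov X : X \in bads p V -> X = cover (phi X).
    rewrite inE => /andP [XV /eqP pX]; apply/setP => x; apply/idP/idP.
      move=> xX; apply/bigcupP; exists (porbit p x); last exact: porbit_id.
      have sX := inv_sub pX xX.
      rewrite inE sX andbT; apply/imsetP; exists x => //.
      by rewrite inE (subsetP XV) //= (subset_trans sX XV).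
    by move/bigcupP => [O]; rewrite inE => /andP [_ /subsetP]; apply.
  by move=> X Y HX HY e; rewrite (cov X HX) (cov Y HY) e.
have step2 : (#|P|).*2 <= #|V| + #|fixs p V|.
  have PV : cover P \subset V.
    apply/subsetP => x /bigcupP [O /imsetP [y]]; rewrite inE => /andP [_ sy] eO.
    by rewrite eO; apply: (subsetP sy).
  have part : partition P (cover P).
    apply/and3P; split => //.
      apply/trivIsetP => _ _ /imsetP [x _ ->] /imsetP [y _ ->] ne.
      apply/pred0P => z /=; apply/negP => /andP [zx zy].
      move: ne; rewrite -(eqP (_ : porbit p z == porbit p x)); last by rewrite eq_porbit_mem.
      by rewrite -(eqP (_ : porbit p z == porbit p y)) ?eqxx // eq_porbit_mem.
    by apply/imsetP => -[x _] /setP /(_ x); rewrite inE porbit_id.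
  have cP := card_partition part.
  have one : #|[set O in P | #|O| == 1%N]| <= #|fixs p V|.
    apply: (leq_trans _ (leq_imset_card (porbit p) _)); apply: subset_leq_card.
    apply/subsetP => O; rewrite inE => /andP [/imsetP [x]]; rewrite inE => /andP [xV _] -> c1.
    apply/imsetP; exists x => //; rewrite inE xV /=.
    have := mem_porbit p 1 x; rewrite expg1.
    have [y ey] : exists y, porbit p x = [set y] by apply/cards1P.
    by rewrite ey !inE => /eqP ->; have := porbit_id p x; rewrite ey inE => /eqP ->.
  apply: (leq_trans _ (leq_add (subset_leq_card PV) one)).
  rewrite cP -!sum1_card -addnn (big_mkcond (fun O => O \in P)) /=.
  rewrite (big_mkcond (fun O => O \in [set O in P | _])) /=.
  rewrite (big_mkcond (fun O => O \in P) (fun O => #|O|)) /= -!big_split /=.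
  apply: leq_sum => O _; rewrite inE.
  case OP: (O \in P) => //=.
  have : #|O| != 0.
    by case/imsetP: OP => x _ ->; apply: card_porbit_neq0.
  by case: #|O| => [|[|k]].
apply: (@leq_trans ((2 ^ #|P|) ^ 2)); first by rewrite leq_sqr.
by rewrite -expnM leq_exp2l // muln2.
Qed.
End Orb.
End OrbS.
Section HolS.
Local Open Scope group_scope.
Lemma card_bigcup_le (I T : finType) (D : {pred I}) (F : I -> {set T}) :
  #|\bigcup_(i in D) F i| <= \sum_(i in D) #|F i|.
Proof.
apply: (big_ind2 (fun (X : {set T}) (k : nat) => #|X| <= k)) => //.
- by rewrite cards0.
- move=> X1 k1 X2 k2 h1 h2; apply: leq_trans (leq_add h1 h2).
  exact: (leq_card_setU X1 X2).1.
Qed.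

Section Hol.
Variable A : finGroupType.
Hypothesis comm : forall x y : A, commute x y.

Lemma refl_inj (c : A) : injective (fun x : A => c * x^-1).
Proof. by move=> x y /= /(mulgI c) /invg_inj. Qed.
Definition refl (c : A) : {perm A} := perm (@refl_inj c).

Definition K : {set {perm A}} :=
  [set transl g | g in [set: A]] :|: [set refl c | c in [set: A]].

Lemma transl1 : transl (1 : A) = 1.
Proof. by apply/permP => x; rewrite permE perm1 mul1g. Qed.

Lemma K_group : group_set K.
Proof.
apply/group_setP; split.
  by rewrite -transl1 inE; apply/orP; left; apply: imset_f.
move=> p q; rewrite !inE => /orP [] /imsetP [a _ ->] /orP [] /imsetP [b _ ->].
- apply/orP; left; apply/imsetP; exists (b * a) => //.
  by apply/permP => x; rewrite permM !permE mulgA.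
- apply/orP; right; apply/imsetP; exists (b * a^-1) => //.
  by apply/permP => x; rewrite permM !permE invMg -mulgA (comm a^-1).
- apply/orP; right; apply/imsetP; exists (b * a) => //.
  by apply/permP => x; rewrite permM !permE mulgA.
- apply/orP; left; apply/imsetP; exists (b * a^-1) => //.
  by apply/permP => x; rewrite permM !permE invMg invgK -!mulgA (comm x).
Qed.

Lemma hol_sub : hol_group A \subset K.
Proof.
have -> : K = Group K_group by [].
rewrite gen_subG; apply/subsetP => p; rewrite !inE => /orP [].
  by move=> H; apply/orP; left.
move=> /eqP ->; apply/orP; right; apply/imsetP; exists 1 => //.
by apply/permP => x; rewrite !permE mul1g.
Qed.

Lemma card_K : #|K| <= (#|A|).*2.
Proof.
apply: leq_trans ((leq_card_setU _ _).1) _.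
by rewrite -addnn leq_add // (leq_trans (leq_imset_card _ _)) // cardsT.
Qed.

Lemma fix_K (p : {perm A}) (V : {set A}) : p \in K -> p != 1 ->
  #|[set x in V | p x == x]| <= #|[set x : A | x ^+ 2 == 1]|.
Proof.
rewrite inE => /orP [] /imsetP [g _ ->] pn1.
  have g1 : g != 1 by apply: contraNneq pn1 => ->; rewrite transl1.
  suff -> : [set x in V | transl g x == x] = set0 by rewrite cards0.
  apply/setP => x; rewrite !inE permE; apply/negP => /andP [_ /eqP e].
  by move: g1; rewrite -(mulIg x g 1) ?eqxx // mul1g.
set F := [set x in V | _].
case: (set_0Vmem F) => [-> | [x0 Fx0]]; first by rewrite cards0.
have sq x : x \in F -> g = x ^+ 2.
  rewrite !inE permE => /andP [_ /eqP e].
  by rewrite expgS expg1 -{1}e mulgKV.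
rewrite -(card_in_imset (f := fun x => x * x0^-1)); last first.
  by move=> x y _ _ /mulIg.
apply: subset_leq_card; apply/subsetP => _ /imsetP [x Fx ->].
rewrite inE expgMn; last exact: comm.
by rewrite expgVn -sq // -sq // mulgV.
Qed.

End Hol.
End HolS.

Theorem mainTheorem8 (A : finGroupType) (E N : {group A}) (S : {set A})
    (chi chiD : nat) :
  abelian [set: A] ->
  (E \x N)%g = [set: A] ->
  (2.-abelem E)%g ->
  odd #|N| ->
  ~~ cyclic N ->
  connection_set S ->
  cay_aut_set S = hol_group A ->
  is_chromatic_number S chi ->
  is_dist_chromatic_number S chiD ->
  chi_bound chi #|A| #|[set x : A | (x ^+ 2 == 1)%g]| ->
  chiD <= chi.+1.
Proof.
move=> Hab _ _ _ _ _ Haut [[f fP] _] [_ Hmin] Hb.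
have comm : forall x y : A, commute x y.
  by move=> x y; move/centsP: Hab => /(_ x (in_setT x) y (in_setT y)).
set n := #|A| in Hb *. set m := #|[set x : A | (x ^+ 2 == 1)%g]| in Hb *.
have n0 : 0 < n by apply/card_gt0P; exists 1%g.
have m0 : 0 < m by apply/card_gt0P; exists 1%g; rewrite inE expg1n.
have chi0 : 0 < chi by case: chi f fP Hb Hmin => [|] // f; case: (f 1%g).
have sum_classes : n = \sum_(j < chi) #|col_class f j|.
  rewrite /n -sum1_card (partition_big f (fun _ => true)) //=.
  apply: eq_bigr => j _; rewrite -sum1_card; apply: eq_bigl => x; rewrite inE.
  by [].
pose j := [arg max_(i > Ordinal chi0) #|col_class f i|].
have Hj : n <= chi * #|col_class f j|.
  rewrite sum_classes /j; case: arg_maxnP => // i _ Hi.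
  apply: (@leq_trans (\sum_(k < chi) #|col_class f i|)).
    by apply: leq_sum => k _; exact: Hi.
  by rewrite big_const_ord iter_addn_0 mulnC.
set V := col_class f j.
have [mV key] := real_step chi0 n0 m0 Hj Hb.
rewrite -/V in mV key.
set Aut := cay_aut_set S.
have one_aut : (1%g : {perm A}) \in Aut by rewrite /Aut Haut group1.
have card_aut : #|Aut| <= n.*2.
  by rewrite /Aut Haut; apply: leq_trans (subset_leq_card (hol_sub comm)) _; exact: card_K.
have fix_aut p : p \in Aut -> p != 1%g -> #|fixs p V| <= m.
  move=> pA; apply: (fix_K comm).
  by apply: (subsetP (hol_sub comm)); rewrite -Haut.
have bnd p : p \in Aut -> p != 1%g -> #|bads p V| * n.*2 < 2 ^ #|V|.
  move=> pA p1; rewrite -(ltn_exp2r _ _ (isT : 0 < 2)) expnMn.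
  apply: (@leq_ltn_trans (2 ^ (#|V| + m) * (n.*2) ^ 2)).
    rewrite leq_mul2r; apply/orP; right; apply: leq_trans (orbit_count p V) _.
    by rewrite leq_exp2l // leq_add2l fix_aut.
  have e : (2 ^ #|V|) ^ 2 = 2 ^ (#|V| + m) * 2 ^ (#|V| - m).
    rewrite -expnM -expnD; congr (2 ^ _).
    lia.
  by rewrite e ltn_pmul2l ?expn_gt0 // -mul2n.
have total : \sum_(p in Aut :\ 1%g) #|bads p V| < 2 ^ #|V|.
  rewrite -(ltn_pmul2r (_ : 0 < n.*2)); last by rewrite double_gt0.
  rewrite big_distrl /=.
  apply: (@leq_ltn_trans (\sum_(p in Aut :\ 1%g) (2 ^ #|V|))).
    apply: leq_sum => p; rewrite in_setD1 => /andP [p1 pA]; apply: ltnW; exact: bnd.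
  rewrite sum_nat_const mulnC ltn_pmul2l ?expn_gt0 //.
  have := cardsD1 1%g Aut; rewrite one_aut add1n => e.
  by apply: leq_trans card_aut; rewrite e.
have [T TV Tn] : exists2 T, T \in powerset V & T \notin \bigcup_(p in Aut :\ 1%g) bads p V.
  apply/subsetPn; apply: contraTN total => sub; rewrite -leqNgt.
  rewrite -card_powerset; apply: leq_trans (subset_leq_card sub) (card_bigcup_le _ _).
have TVs : T \subset V by rewrite -powersetE.
pose g (x : A) : 'I_chi.+1 := if x \in T then ord_max else widen_ord (leqnSn chi) (f x).
apply: Hmin; exists g; split.
- move=> x y xy; rewrite /g.
  case: ifP => xT; case: ifP => yT.
  + have := fP x y xy.
    have := subsetP TVs x xT; have := subsetP TVs y yT.
    by rewrite !inE => /eqP -> /eqP ->; rewrite eqxx.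
  + apply/eqP => /(congr1 val) /= e; have := ltn_ord (f y); rewrite -e ltnn.
    by [].
  + apply/eqP => /(congr1 val) /= e; have := ltn_ord (f x); rewrite e ltnn.
    by [].
  + apply: contra (fP x y xy) => /eqP /(congr1 val) /= e; apply/eqP/val_inj.
    exact: e.
- move=> p pA p1; exists ord_max.
  have cls : col_class g ord_max = T.
    apply/setP => x; rewrite inE /g; case: ifP => xT; rewrite ?eqxx //.
    apply/negbTE; apply/eqP => /(congr1 val) /= e; have := ltn_ord (f x).
    by rewrite e ltnn.
  rewrite cls; apply: contraNneq Tn => e.
  apply/bigcupP; exists p; first by rewrite in_setD1 p1 /Aut inE pA.
  by rewrite inE e eqxx andbT -powersetE.
Qed.
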